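(* Let $S_X,S_Y$ be finite nonempty action sets and $\varphi:S_X\times S_Y\to\mathbb{R}$. Suppose $\varphi\equiv0$ is enforceable with $\lambda_{\min}=1$, i.e., there is a $(\varphi,1)$-autocratic behavioral strategy for $X$ but no $(\varphi,\lambda)$-autocratic behavioral strategy for any $\lambda\in[0,1)$. Then there exist $\tau_X^+,\tau_X^-\in\Delta(S_X)$ such that $$\max_{s_Y}\varphi(\tau_X^+,s_Y)>\min_{s_Y}\varphi(\tau_X^+,s_Y)=0=\max_{s_Y}\varphi(\tau_X^-,s_Y)>\min_{s_Y}\varphi(\tau_X^-,s_Y),$$ with maxima and minima over $s_Y\in S_Y$.
   Context: Two players $X,Y$ play a repeated game with finite action sets $S_X,S_Y$; $\Delta(S)$ denotes the probability distributions on $S$; $\varphi(\tau_X,s_Y)=\mathbb{E}_{s_X\sim\tau_X}[\varphi(s_X,s_Y)]$. Histories: $\mathcal{H}=\bigcup_{T\ge0}(S_X\times S_Y)^T$; behavioral strategies are maps $\sigma:\mathcal{H}\to\Delta(S)$; players independently draw actions each round from their strategies evaluated at the history of realized action pairs, with $\mathbb{E}_{\sigma_X,\sigma_Y}$ the expectation over the resulting play. For $\lambda\in[0,1)$, $\sigma_X$ is $(\varphi,\lambda)$-autocratic if for every behavioral strategy $\sigma_Y$, $\mathbb{E}_{\sigma_X,\sigma_Y}[(1-\lambda)\sum_{t\ge0}\lambda^t\varphi(s_X^t,s_Y^t)]=0$; it is $(\varphi,1)$-autocratic if for every $\sigma_Y$ the limit $\lim_{T\to\infty}\frac1{T+1}\sum_{t=0}^T\mathbb{E}_{\sigma_X,\sigma_Y}[\varphi(s_X^t,s_Y^t)]$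 exists and equals $0$. *)

(* Defs.v *)
From HB Require Import structures.
From mathcomp Require Import all_boot all_order all_algebra.
From mathcomp Require Import all_classical all_reals all_analysis.
Set Implicit Arguments. Unset Strict Implicit. Unset Printing Implicit Defensive.
Import Order.TTheory GRing.Theory Num.Theory.
Import numFieldNormedType.Exports.
Local Open Scope classical_set_scope.
Local Open Scope ring_scope.

Record dist (R : realType) (S : finType) := Dist {
  pmf :> S -> R;
  pmf_ge0 : forall s, 0 <= pmf s;
  pmf_sum1 : \sum_(s : S) pmf s = 1 }.

(* Histories: finite sequences of realized action pairs, in chronological order. *)
Definition history (SX SY : finType) := seq (SX * SY).

Definition bstrat (R : realType) (SX SY S : finType) :=
  history SX SY -> dist R S.

Fixpoint prob_from (R : realType) (SX SY : finType)
  (sX : bstrat R SX SY SX) (sY : bstrat R SX SY SY)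
  (past : history SX SY) (future : seq (SX * SY)) : R :=
  match future with
  | [::] => 1
  | (a, b) :: f => sX past a * sY past b * prob_from sX sY (rcons past (a, b)) f
  end.

Definition hprob (R : realType) (SX SY : finType)
  (sX : bstrat R SX SY SX) (sY : bstrat R SX SY SY) (h : history SX SY) : R :=
  prob_from sX sY [::] h.

Definition stage_exp (R : realType) (SX SY : finType) (phi : SX -> SY -> R)
  (sX : bstrat R SX SY SX) (sY : bstrat R SX SY SY) (t : nat) : R :=
  \sum_(h : t.-tuple (SX * SY))
     hprob sX sY h * \sum_(a : SX) \sum_(b : SY) sX h a * sY h b * phi a b.

Definition autocratic_disc (R : realType) (SX SY : finType) (phi : SX -> SY -> R)
  (l : R) (sX : bstrat R SX SY SX) : Prop :=
  forall sY : bstrat R SX SY SY,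
    (fun n : nat => \sum_(t < n) (1 - l) * l ^+ t * stage_exp phi sX sY t)
      @ \oo --> (0 : R).

(* (phi, 1)-autocratic: the Cesaro averages of expected payoffs converge to 0. *)
Definition autocratic_avg (R : realType) (SX SY : finType) (phi : SX -> SY -> R)
  (sX : bstrat R SX SY SX) : Prop :=
  forall sY : bstrat R SX SY SY,
    (fun T : nat => (T.+1%:R)^-1 * \sum_(t < T.+1) stage_exp phi sX sY t)
      @ \oo --> (0 : R).

Definition phi_mix (R : realType) (SX SY : finType) (phi : SX -> SY -> R)
  (tau : dist R SX) (sy : SY) : R :=
  \sum_(a : SX) tau a * phi a sy.

(* Main.v *)
Require Import Defs.
From HB Require Import structures.
From mathcomp Require Import all_boot all_order all_algebra.
From mathcomp Require Import all_classical all_reals all_analysis.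
From mathcomp Require Import ring lra.
Import Order.TTheory GRing.Theory Num.Theory.
Import numFieldNormedType.Exports.
Local Open Scope classical_set_scope.
Local Open Scope ring_scope.
Section Alg.
Variables (R : realType) (SX SY : finType).

Lemma sum_dirac (b : SY) (g : SY -> R) : \sum_s (s == b)%:R * g s = g b.
Proof.
rewrite (bigD1 b) //= eqxx mul1r big1 ?addr0 // => s /negbTE ->; by rewrite mul0r.
Qed.

Definition diracd (b : SY) : dist R SY.
refine (@Dist R SY (fun s => (s == b)%:R) _ _).
- by move=> s; rewrite ler0n.
- by rewrite -[RHS](sum_dirac b (fun _ => 1)); apply: eq_bigr => s _; rewrite mulr1.
Defined.

Definition mixd (t : R) (ht : 0 <= t <= 1) (t0 t1 : dist R SX) : dist R SX.
refine (@Dist R SX (fun a => (1 - t) * t0 a + t * t1 a) _ _).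
- move=> s; case/andP: ht => h0 h1.
  by apply: addr_ge0; apply: mulr_ge0 => //; [rewrite subr_ge0 | exact: Defs.pmf_ge0 | exact: Defs.pmf_ge0].
- by rewrite big_split /= -!mulr_sumr !Defs.pmf_sum1 !mulr1 subrK.
Defined.

Lemma phi_mix_mixd (phi : SX -> SY -> R) t ht t0 t1 b :
  phi_mix phi (@mixd t ht t0 t1) b = (1 - t) * phi_mix phi t0 b + t * phi_mix phi t1 b.
Proof.
rewrite /phi_mix /= !mulr_sumr -big_split /=; apply: eq_bigr => a _.
by rewrite mulrDl !mulrA.
Qed.

Lemma exists_argmax (b0 : SY) (f : SY -> R) : exists b, forall b', f b' <= f b.
Proof.
case: (@arg_maxP _ R SY b0 predT f isT) => b _ H.
by exists b => b'; apply: H.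
Qed.

Lemma stepC (phi : SX -> SY -> R)
  (hz : forall tau : dist R SX, exists b, phi_mix phi tau b != 0)
  (t0 t1 : dist R SX) (h0 : forall b, phi_mix phi t0 b <= 0)
  (h1 : forall b, 0 <= phi_mix phi t1 b) :
  exists tau : dist R SX,
    [/\ (forall sy, 0 <= phi_mix phi tau sy),
        (exists sy, phi_mix phi tau sy = 0) &
        (exists sy, 0 < phi_mix phi tau sy)].
Proof.
pose al b := phi_mix phi t0 b. pose be b := phi_mix phi t1 b.
pose tb b := if al b < 0 then - al b / (be b - al b) else 0.
have [b1 /negPf hb1] := hz t0.
have al1 : al b1 < 0 by rewrite lt_neqAle hb1 h0.
have tbpos b : al b < 0 -> 0 < tb b /\ tb b <= 1 /\ (be b - al b) * tb b = - al b.
  move=> hb; rewrite /tb hb.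
  have hd : 0 < be b - al b by rewrite subr_gt0; apply: (lt_le_trans hb); exact: h1.
  split; first by rewrite divr_gt0 // oppr_gt0.
  split; first by rewrite ler_pdivrMr // mul1r; have := h1 b; rewrite /be; lra.
  by rewrite mulrC divfK // gt_eqF.
have [bs hbs] := exists_argmax b1 tb.
have tbs : 0 < tb bs by apply: lt_le_trans (hbs b1); case: (tbpos _ al1).
have als : al bs < 0 by move: tbs; rewrite /tb; case: ifP => //; rewrite ltxx.
have [_ [tbs1 tbsE]] := tbpos _ als.
have ht : 0 <= tb bs <= 1 by rewrite tbs1 ltW.
set tau := mixd (tb bs) ht t0 t1.
have Ltau b : phi_mix phi tau b = al b + (be b - al b) * tb bs.
  by rewrite phi_mix_mixd -/(al b) -/(be b); ring.
have Hge b : 0 <= phi_mix phi tau b.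
  rewrite Ltau; case: (ltP (al b) 0) => hb.
  - have [_ [_ tbE]] := tbpos _ hb.
    have hd : 0 <= be b - al b by rewrite subr_ge0; apply: le_trans (ltW hb) (h1 b).
    have := ler_wpM2l hd (hbs b); rewrite tbE; lra.
  - have -> : al b = 0 by apply/eqP; rewrite eq_le hb h0.
    by rewrite add0r subr0 mulr_ge0 // ltW.
exists tau; split => //.
- by exists bs; rewrite Ltau tbsE addrN.
- have [b /negPf hb] := hz tau; exists b; by rewrite lt_neqAle eq_sym hb Hge.
Qed.
End Alg.
Section Top.
Variables (R : realType) (n : nat).

Lemma cont_sum (I : Type) (r : seq I) (g : I -> 'rV[R]_n -> R) :
  (forall i, continuous (g i)) -> continuous (fun v => \sum_(i <- r) g i v).
Proof.
move=> hg; elim: r => [|i r IH].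
  rewrite (_ : (fun v => _) = fun _ => 0); first exact: cst_continuous.
  by apply: funext => v; rewrite big_nil.
rewrite (_ : (fun v => _) = (g i) \+ (fun v => \sum_(j <- r) g j v)).
  by move=> v; apply: continuousD; [exact: hg | exact: IH].
by apply: funext => v; rewrite big_cons.
Qed.

Lemma cont_lin (c : 'I_n -> R) :
  continuous (fun v : 'rV[R]_n => \sum_(i < n) v ord0 i * c i).
Proof.
apply: cont_sum => i v.
apply: (@continuousM R _ (fun v : 'rV[R]_n => v ord0 i) (fun=> c i)).
  exact: coord_continuous.
exact: cst_continuous.
Qed.

Lemma cont_min (I : Type) (r : seq I) (g : I -> 'rV[R]_n -> R) (g0 : 'rV[R]_n -> R) :
  continuous g0 -> (forall i, continuous (g i)) ->
  continuous (fun v => \big[Num.min/g0 v]_(i <- r) g i v).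
Proof.
move=> h0 hg; elim: r => [|i r IH].
  rewrite (_ : (fun v => _) = g0) //.
  by apply: funext => v; rewrite big_nil.
rewrite (_ : (fun v => _) = (g i) \min (fun v => \big[Num.min/g0 v]_(j <- r) g j v)).
  by move=> v; apply: continuous_min; [exact: hg | exact: IH].
by apply: funext => v; rewrite big_cons.
Qed.
End Top.
Lemma bigmin_le (R : realType) (I : eqType) (r : seq I) (g : I -> R) x0 b :
  b \in r -> \big[Num.min/x0]_(i <- r) g i <= g b.
Proof.
elim: r => [//|i r IH]; rewrite inE big_cons ge_min => /orP[/eqP->|/IH->].
  by rewrite lexx.
by rewrite orbT.
Qed.

Lemma bigmin_att (R : realType) (I : Type) (r : seq I) (g : I -> R) b0 :
  exists b, \big[Num.min/g b0]_(i <- r) g i = g b.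
Proof.
elim: r => [|i r [b IH]]; first by exists b0; rewrite big_nil.
rewrite big_cons IH minEle; case: ifP => _; [by exists i | by exists b].
Qed.

Section Comp.
Variables (R : realType) (SX SY : finType).

Definition Lf (phi : SX -> SY -> R) b (v : 'rV[R]_#|SX|) :=
  \sum_(i < #|SX|) v ord0 i * phi (enum_val i) b.
Definition vec (tau : dist R SX) : 'rV[R]_#|SX| := \row_i tau (enum_val i).

Lemma sum_ev (f : SX -> R) : \sum_(i < #|SX|) f (enum_val i) = \sum_a f a.
Proof. by rewrite [RHS](reindex (@enum_val SX predT)) //; apply: onW_bij; exact: enum_val_bij. Qed.

Lemma Lvec phi b tau : Lf phi b (vec tau) = phi_mix phi tau b.
Proof. by rewrite /Lf /phi_mix -sum_ev; apply: eq_bigr => i _; rewrite mxE. Qed.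

Definition Aset : set 'rV[R]_#|SX| :=
  (\bigcap_(i in setT) ((fun v : 'rV[R]_#|SX| => v ord0 i) @^-1` [set x | 0 <= x]))
  `&` ((fun v : 'rV[R]_#|SX| => \sum_i v ord0 i) @^-1` [set x | x = 1]).

Lemma vecA tau : Aset (vec tau).
Proof.
split.
  by move=> i _ /=; rewrite mxE; exact: Defs.pmf_ge0.
rewrite /= (eq_bigr (fun i => tau (enum_val i))) => [|i _]; last by rewrite mxE.
by rewrite sum_ev Defs.pmf_sum1.
Qed.

Definition distOf (v : 'rV[R]_#|SX|) (hv : Aset v) : dist R SX.
refine (@Dist R SX (fun a => v ord0 (enum_rank a)) _ _).
- by move=> a; case: hv => h _; exact: (h (enum_rank a) I).
- case: hv => _ /= <-; rewrite -sum_ev; apply: eq_bigr => i _.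
  by rewrite enum_valK.
Defined.
Arguments distOf {v} hv.

Lemma LdistOf phi b v (hv : Aset v) : phi_mix phi (distOf hv) b = Lf phi b v.
Proof. by rewrite /phi_mix -sum_ev /=; apply: eq_bigr => i _; rewrite enum_valK. Qed.

Lemma compactA : compact Aset.
Proof.
apply: (@subclosed_compact _ Aset
   [set v : 'rV[R]_#|SX| | forall i, `[(0:R), 1]%classic (v ord0 i)]).
- apply: closedI.
    apply: closed_bigI => i _.
    apply: (continuous_closedP _).1; first exact: coord_continuous.
    exact: closed_ge.
  apply: (continuous_closedP _).1; last exact: closed_eq.
  rewrite (_ : (fun v : 'rV[R]_#|SX| => _) = fun v => \sum_(i <- index_enum 'I_#|SX|) v ord0 i * 1).
    exact: cont_lin.
  by apply: funext => v; apply: eq_bigr => i _; rewrite mulr1.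
- apply: (@rV_compact _ _ (fun=> `[(0:R), 1]%classic)) => i; exact: segment_compact.
- move=> v [hv1 hv2] i /=; rewrite in_itv /=.
  have h0 := hv1 i I.
  rewrite h0 /= -hv2 (bigD1 i) //= lerDl.
  by apply: sumr_ge0 => j _; exact: (hv1 j I).
Qed.

Lemma unif_neg (phi : SX -> SY -> R) (b0 : SY)
  (H : forall tau : dist R SX, exists b, phi_mix phi tau b < 0) :
  exists c : R, 0 < c /\ forall tau : dist R SX, exists b, phi_mix phi tau b <= - c.
Proof.
case: (pselect (exists tau : dist R SX, True)) => [[tau0 _]|Hn]; last first.
  by exists 1; split => // tau; exfalso; apply: Hn; exists tau.
pose F v := \big[Num.min/Lf phi b0 v]_(b <- enum SY) Lf phi b v.
have cF : continuous F.
  apply: cont_min => [|b]; rewrite /Lf; exact: cont_lin.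
have A0 : Aset !=set0 by exists (vec tau0); exact: vecA.
have [c cA cmax] := EVT_max_rV A0 compactA (continuous_subspaceT cF).
have hc : Aset c by rewrite inE in cA.
have [b hb] := H (distOf hc).
rewrite LdistOf in hb.
exists (- Lf phi b c); split; first by rewrite oppr_gt0.
move=> tau; rewrite opprK.
have [b' hb'] := @bigmin_att R SY (enum SY) (fun b => Lf phi b (vec tau)) b0.
exists b'; rewrite -Lvec -hb'.
apply: le_trans (cmax (vec tau) _) _; first by rewrite inE; exact: vecA.
by apply: bigmin_le; rewrite mem_enum.
Qed.
End Comp.
Lemma big_tuple_cons (R : realType) (T : finType) m (F : seq T -> R) :
  \sum_(f : m.+1.-tuple T) F f = \sum_(x : T) \sum_(f : m.-tuple T) F (x :: f).
Proof.
rewrite pair_bigA /=.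
rewrite (reindex (fun p : T * m.-tuple T => [tuple of p.1 :: p.2])) //=.
apply: onW_bij; exists (fun u : m.+1.-tuple T => (thead u, [tuple of behead u])).
  by move=> [x f] /=; congr pair; apply: val_inj.
by move=> u; apply: val_inj => /=; rewrite [in RHS](tuple_eta u).
Qed.

Section Game.
Variables (R : realType) (SX SY : finType).

Lemma prob_ge0 (sX : bstrat R SX SY SX) (sY : bstrat R SX SY SY) f past :
  0 <= prob_from sX sY past f.
Proof.
elim: f past => [|[a b] f IH] past /=; first exact: ler01.
by rewrite !mulr_ge0 // Defs.pmf_ge0.
Qed.

Lemma prob_sum (sX : bstrat R SX SY SX) (sY : bstrat R SX SY SY) t past :
  \sum_(f : t.-tuple (SX * SY)) prob_from sX sY past f = 1.
Proof.
elim: t past => [|t IH] past.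
  rewrite (eq_bigr (fun _ => 1)) => [|f _]; last by rewrite (size0nil (size_tuple f)).
  by rewrite sumr_const card_tuple expn0.
rewrite big_tuple_cons.
rewrite (eq_bigr (fun x => sX past x.1 * sY past x.2)) => [|[a b] _]; last first.
  by rewrite /= -mulr_sumr IH mulr1.
rewrite -(pair_bigA _ (fun a b => sX past a * sY past b)) /=.
rewrite (eq_bigr (fun a => sX past a)) => [|a _]; first exact: Defs.pmf_sum1.
by rewrite -mulr_sumr Defs.pmf_sum1 mulr1.
Qed.

Lemma zero_strat (phi : SX -> SY -> R) (tau : dist R SX)
  (H : forall b, phi_mix phi tau b = 0) :
  autocratic_disc phi 0 (fun _ => tau).
Proof.
move=> sY.
have E t : stage_exp phi (fun _ => tau) sY t = 0.
  rewrite /stage_exp big1 // => h _.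
  rewrite exchange_big /= big1 ?mulr0 // => b _.
  rewrite (eq_bigr (fun a => sY h b * (tau a * phi a b))) => [|a _]; last by ring.
  by rewrite -mulr_sumr; have := H b; rewrite /phi_mix => ->; rewrite mulr0.
rewrite (_ : (fun n : nat => _) = fun _ => 0); first exact: cvg_cst.
by apply: funext => m; rewrite big1 // => t _; rewrite E mulr0.
Qed.

Lemma stepB (phi : SX -> SY -> R) (sX : bstrat R SX SY SX)
  (HA : autocratic_avg phi sX) (b0 : SY) :
  exists tau : dist R SX, forall b, 0 <= phi_mix phi tau b.
Proof.
apply: contrapT => Hn.
have H' : forall tau : dist R SX, exists b, phi_mix phi tau b < 0.
  move=> tau; apply: contrapT => nb; apply: Hn; exists tau => b.
  rewrite leNgt; apply/negP => hb; apply: nb; by exists b.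
have [c [c0 hc]] := @unif_neg R SX SY phi b0 H'.
pose bsel (tau : dist R SX) := odflt b0 [pick b | phi_mix phi tau b <= - c].
have hsel tau : phi_mix phi tau (bsel tau) <= - c.
  rewrite /bsel; case: pickP => [b hb //|hn].
  by have [b hb] := hc tau; have := hn b; rewrite hb.
pose sY : bstrat R SX SY SY := fun h => @diracd R SY (bsel (sX h)).
have hst t : stage_exp phi sX sY t <= - c.
  rewrite /stage_exp.
  have inner h : \sum_a \sum_b sX h a * sY h b * phi a b
                 = phi_mix phi (sX h) (bsel (sX h)).
    rewrite /phi_mix; apply: eq_bigr => a _.
    rewrite (eq_bigr (fun b => (b == bsel (sX h))%:R * (sX h a * phi a b))) => [|b _].
      by rewrite sum_dirac.
    rewrite /sY /=; ring.
  rewrite -[X in _ <= X]mul1r -(prob_sum sX sY t [::]) mulr_suml.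
  apply: ler_sum => h _; rewrite inner; apply: ler_wpM2l; first exact: prob_ge0.
  exact: hsel.
have := cvgr0_norm_lt _ (HA sY) _ c0.
case => N _ HN; have := HN N (leqnn N).
set S := \sum_(t < N.+1) _.
have hS : S <= N.+1%:R * - c.
  rewrite /S; apply: le_trans; first by apply: ler_sum => t _; exact: hst.
  by rewrite sumr_const card_ord mulr_natl.
have hN : 0 < N.+1%:R :> R by rewrite ltr0n.
have hu : (N.+1%:R)^-1 * S <= - c by rewrite mulrC ler_pdivrMr // mulrC.
rewrite ltr_norml => /andP[h1 _].
by have := lt_le_trans h1 hu; rewrite ltxx.
Qed.
End Game.
Lemma phi_mixN (R : realType) (SX SY : finType) (phi : SX -> SY -> R) tau b :
  phi_mix (fun a b => - phi a b) tau b = - phi_mix phi tau b.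
Proof. by rewrite /phi_mix -sumrN; apply: eq_bigr => a _; rewrite mulrN. Qed.

Lemma stage_expN (R : realType) (SX SY : finType) (phi : SX -> SY -> R) sX sY t :
  stage_exp (fun a b => - phi a b) sX sY t = - stage_exp phi sX sY t.
Proof.
rewrite /stage_exp -sumrN; apply: eq_bigr => h _; rewrite -mulrN; congr (_ * _).
rewrite -sumrN; apply: eq_bigr => a _; rewrite -sumrN; apply: eq_bigr => b _.
by rewrite mulrN.
Qed.

Lemma avgN (R : realType) (SX SY : finType) (phi : SX -> SY -> R) {sX} :
  autocratic_avg phi sX -> autocratic_avg (fun a b => - phi a b) sX.
Proof.
move=> HA sY.
rewrite (_ : (fun T : nat => _) = (fun T : nat =>
   - ((T.+1%:R)^-1 * \sum_(t < T.+1) stage_exp phi sX sY t))).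
  have := cvgN (HA sY); rewrite oppr0; apply; exact: filter_nbhs_filter.
apply: funext => T; rewrite -mulrN -sumrN; congr (_ * _).
by apply: eq_bigr => t _; rewrite stage_expN.
Qed.

Theorem lemma4 (R : realType) (SX SY : finType)
  (hX : (0 < #|SX|)%N) (hY : (0 < #|SY|)%N) (phi : SX -> SY -> R) :
  (exists sX : bstrat R SX SY SX, autocratic_avg phi sX) ->
  (forall l : R, 0 <= l -> l < 1 ->
     ~ exists sX : bstrat R SX SY SX, autocratic_disc phi l sX) ->
  exists (tp tm : dist R SX),
    (* max_{sY} phi(tp,sY) > min_{sY} phi(tp,sY) = 0 *)
    [/\ (forall sy, 0 <= phi_mix phi tp sy),
        (exists sy, phi_mix phi tp sy = 0) &
        (exists sy, 0 < phi_mix phi tp sy)] /\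
    (* 0 = max_{sY} phi(tm,sY) > min_{sY} phi(tm,sY) *)
    [/\ (forall sy, phi_mix phi tm sy <= 0),
        (exists sy, phi_mix phi tm sy = 0) &
        (exists sy, phi_mix phi tm sy < 0)].
Proof.
move=> [sX HA] Hd.
have /card_gt0P [b0 _] := hY.
have hz : forall tau : dist R SX, exists b, phi_mix phi tau b != 0.
  move=> tau; apply: contrapT => nz; apply: (Hd 0 (lexx 0) ltr01).
  exists (fun _ => tau); apply: zero_strat => b; apply/eqP; apply: contrapT => hb.
  by apply: nz; exists b; apply/negP.
have hzN : forall tau : dist R SX, exists b, phi_mix (fun a b => - phi a b) tau b != 0.
  by move=> tau; have [b hb] := hz tau; exists b; rewrite phi_mixN oppr_eq0.
have [t1 h1] := @stepB R SX SY _ _ HA b0.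
have [t0 h0'] := @stepB R SX SY _ _ (avgN _ _ _ _ HA) b0.
have h0 : forall b, phi_mix phi t0 b <= 0.
  by move=> b; have := h0' b; rewrite phi_mixN oppr_ge0.
have [tp Hp] := @stepC R SX SY phi hz _ _ h0 h1.
have h1' : forall b, phi_mix (fun a b => - phi a b) t1 b <= 0.
  by move=> b; rewrite phi_mixN oppr_le0.
have [tm [Hm1 [b2 Hm2] [b3 Hm3]]] := @stepC R SX SY (fun a b => - phi a b) hzN t1 t0
  h1' h0'.
exists tp, tm; split => //; split.
- by move=> b; have := Hm1 b; rewrite phi_mixN oppr_ge0.
- by exists b2; apply/eqP; rewrite -oppr_eq0 -phi_mixN Hm2.
- by exists b3; rewrite -oppr_gt0 -phi_mixN.
Qed.
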